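(* Let $E$ be a real Banach space, $K\subset E$ nonempty closed convex, $g\in\mathcal F$ totally convex on $E$ satisfying H1–H2, $Y$ a real Banach space containing a closed, convex, pointed cone $C$ with nonempty interior, and $f:E\times E\to Y$. If $T:K\to\mathcal P(K)$ (with nonempty closed convex values) is quasi $D_g$-nonexpansive, and $f(x,\cdot)$ is $C$-convex and positively lower semicontinuous for all $x\in E$, then $DS(f,T)$ is closed and convex.
   Context: $\mathcal F$: functions $g:E\to\mathbb R$ strictly convex, lower semicontinuous, Gâteaux differentiable (derivative $g'$). $D_g(x,y)=g(x)-g(y)-\langle x-y,g'(y)\rangle$; $v_g(x,t)=\inf\{D_g(y,x):\|y-x\|=t\}$; totally convex: $v_g(x,t)>0$ for all $x$, $t>0$. H1: level sets of $D_g(x,\cdot)$ bounded for all $x$; H2: $\inf_{x\in A}v_g(x,t)>0$ for all $t>0$ and bounded $A$. $\Pi^g_D(x)$ = unique minimizer of $D_g(\cdot,x)$ over nonempty closed convex $D$. $\mathrm{Fix}(T)=\{x\in K:x\in T(x)\}$; $T$ is quasi $D_g$-nonexpansive if $S(x):=\Pi^g_{T(x)}(x)$ has $\mathrm{Fix}(S)\ne\emptyset$ and $D_g(p,S(x))\le D_g(p,x)$ for $p\in\mathrm{Fix}(S)$, $x\in K$. $C^+=\{z\in Y^*:\langle y,z\rangle\ge0\ \forall y\in C\}$; $y\preceq y'$ iff $y'-y\in C$; $C$-convex: $G(tx+(1-t)y)\preceq tG(x)+(1-t)G(y)$; positively lower semicontinuous: $x\mapsto\langle G(x),z\rangle$ lower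 semicontinuous for every $z\in C^+$. $DS(f,T)=\{x\in K:x\in T(x),\ f(y,x)\in-C\ \forall y\in K\}$. *)

(* Defs.v *)
From HB Require Import structures.
From mathcomp Require Import all_boot all_order all_algebra.
From mathcomp Require Import all_classical all_reals all_analysis.
Set Implicit Arguments. Unset Strict Implicit. Unset Printing Implicit Defensive.
Import Order.TTheory GRing.Theory Num.Theory.
Import numFieldNormedType.Exports.
Local Open Scope classical_set_scope.
Local Open Scope ring_scope.

Section Defs.
Context {R : realType}.

Definition dual_elt {V : normedModType R} (z : V -> R) :=
  (forall (a : R) (u v : V), z (a *: u + v) = a * z u + z v) /\ continuous z.

Definition strictly_convex {V : normedModType R} (g : V -> R) :=
  forall x y (t : R), x != y -> 0 < t < 1 ->
    g (t *: x + (1 - t) *: y) < t * g x + (1 - t) * g y.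

Definition gateaux_derivative {V : normedModType R} (g : V -> R) (gd : V -> V -> R) :=
  forall x, dual_elt (gd x) /\
    forall v, (fun t : R => (g (x + t *: v) - g x) / t) @ 0^' --> gd x v.

Definition class_F {V : normedModType R} (g : V -> R) (gd : V -> V -> R) :=
  strictly_convex g /\ lower_semicontinuous (fun x => (g x)%:E) /\
  gateaux_derivative g gd.

Definition bregman {V : normedModType R} (g : V -> R) (gd : V -> V -> R) (x y : V) : R :=
  g x - g y - gd y (x - y).

(* modulus of total convexity v_g(x,t) (inf of the empty set is +oo) *)
Definition modulus_tc {V : normedModType R} (g : V -> R) (gd : V -> V -> R)
  (x : V) (t : R) : \bar R :=
  ereal_inf [set (bregman g gd y x)%:E | y in [set y | `|y - x| = t]].

Definition totally_convex {V : normedModType R} (g : V -> R) (gd : V -> V -> R) :=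
  forall x (t : R), 0 < t -> (0 < modulus_tc g gd x t)%E.

Definition bounded_set {V : normedModType R} (A : set V) :=
  exists M : R, forall x, A x -> `|x| <= M.

Definition H1 {V : normedModType R} (g : V -> R) (gd : V -> V -> R) :=
  forall x (r : R), bounded_set [set y | bregman g gd x y <= r].

Definition H2 {V : normedModType R} (g : V -> R) (gd : V -> V -> R) :=
  forall (t : R) (A : set V), 0 < t -> bounded_set A ->
    (0 < ereal_inf [set modulus_tc g gd x t | x in A])%E.

Definition is_bregman_proj {V : normedModType R} (g : V -> R) (gd : V -> V -> R)
  (D : set V) (x p : V) :=
  D p /\ forall y, D y -> bregman g gd p x <= bregman g gd y x.

Definition Fix1 {V : Type} (K : set V) (S : V -> V) := [set x | K x /\ S x = x].

Definition quasi_Dg_nonexpansive {V : normedModType R} (g : V -> R) (gd : V -> V -> R)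
  (K : set V) (T : V -> set V) :=
  exists S : V -> V,
    (forall x, K x -> is_bregman_proj g gd (T x) x (S x)) /\
    Fix1 K S !=set0 /\
    (forall p x, Fix1 K S p -> K x -> bregman g gd p (S x) <= bregman g gd p x).

Definition is_cone {W : normedModType R} (C : set W) :=
  forall (t : R) c, 0 <= t -> C c -> C (t *: c).

Definition pointed {W : normedModType R} (C : set W) :=
  forall c, C c -> C (- c) -> c = 0.

Definition dual_cone {W : normedModType R} (C : set W) : set (W -> R) :=
  [set z | dual_elt z /\ forall y, C y -> 0 <= z y].

Definition cone_le {W : normedModType R} (C : set W) (y y' : W) := C (y' - y).

Definition C_convex {V W : normedModType R} (C : set W) (G : V -> W) :=
  forall x y (t : R), 0 <= t <= 1 ->
    cone_le C (G (t *: x + (1 - t) *: y)) (t *: G x + (1 - t) *: G y).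

Definition pos_lsc {V W : normedModType R} (C : set W) (G : V -> W) :=
  forall z, dual_cone C z -> lower_semicontinuous (fun x => (z (G x))%:E).

Definition DS {V W : normedModType R} (K : set V) (C : set W) (f : V -> V -> W)
  (T : V -> set V) : set V :=
  [set x | K x /\ T x x /\ forall y, K y -> [set - c | c in C] (f y x)].

End Defs.

(* Main.v *)
Require Import Defs.
From HB Require Import structures.
From mathcomp Require Import all_boot all_order all_algebra.
From mathcomp Require Import all_classical all_reals all_analysis.
From mathcomp.algebra_tactics Require Import ring lra.
Import Order.TTheory GRing.Theory Num.Theory.
Import numFieldNormedType.Exports.
Local Open Scope classical_set_scope.
Local Open Scope ring_scope.
Set Implicit Arguments. Unset Strict Implicit.
Definition Pg (R : realType) (Y : normedModType R) (C : set Y) (u : Y) (e : R)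
  (G : set (Y * R)) : Prop :=
  [/\ forall t : R, G (t *: - u, t * e),
      forall a b r s, G (a, r) -> G (b, s) -> G (a + b, r + s),
      forall t a r, G (a, r) -> G (t *: a, t * r),
      forall a r s, G (a, r) -> G (a, s) -> r = s &
      forall a r c, G (a, r) -> C c -> r <= `|a + c| ].

Lemma norm_resc (R : realType) (Y : normedModType R) (s : R) (m v c : Y) :
  0 < s -> s * `|s^-1 *: m + v + s^-1 *: c| = `|m + s *: v + c|.
Proof.
move=> s0; rewrite -[X in X * _]gtr0_norm // -normrZ.
by rewrite !scalerDr !scalerA mulfV ?gt_eqF // !scale1r.
Qed.

Lemma Pg_ext (R : realType) (Y : normedModType R) (C : set Y) (u : Y) (e : R)
  (G : set (Y * R)) (y0 : Y) :
  C 0 -> (forall a b, C a -> C b -> C (a + b)) ->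
  (forall t c, 0 <= t -> C c -> C (t *: c)) ->
  Pg C u e G -> ~ (exists r, G (y0, r)) ->
  exists B, Pg C u e B /\ G `<=` B /\ exists r, B (y0, r) /\ ~ G (y0, r).
Proof.
move=> C0 Cadd Cscal [G1 G2 G3 G4 G5] ny0.
have G00 : G (0, 0) by have := G1 0; rewrite scale0r mul0r.
have GN a r : G (a, r) -> G (- a, - r).
  by move=> /(G3 (-1)); rewrite scaleN1r mulN1r.
pose S := [set x : R | exists m r c, [/\ G (m, r), C c & x = r - `|m - y0 + c| ] ].
have Sub m r c m' r' c' : G (m, r) -> C c -> G (m', r') -> C c' ->
    r - `|m - y0 + c| <= `|m' + y0 + c'| - r'.
  move=> Gm Cc Gm' Cc'.
  have := G5 _ _ _ (G2 _ _ _ _ Gm Gm') (Cadd _ _ Cc Cc').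
  have : `|m + m' + (c + c')| <= `|m - y0 + c| + `|m' + y0 + c'|.
    rewrite (_ : m + m' + (c + c') = (m - y0 + c) + (m' + y0 + c')); last first.
      by symmetry; rewrite addrACA [X in X + _]addrACA addNr addr0.
    exact: ler_normD.
  lra.
have hS : has_sup S.
  split; first by exists (0 - `|0 - y0 + 0|); exists 0, 0, 0.
  exists (`|0 + y0 + 0| - 0) => x [m [r [c [Gm Cc ->]]]].
  exact: Sub.
pose c0 := sup S.
have upper m r c : G (m, r) -> C c -> r - `|m - y0 + c| <= c0.
  by move=> Gm Cc; apply: sup_upper_bound => //; exists m, r, c.
have lower m r c : G (m, r) -> C c -> c0 <= `|m + y0 + c| - r.
  move=> Gm Cc; apply: ge_sup; first by case: hS.
  move=> x [m' [r' [c' [Gm' Cc' ->]]]]; exact: Sub.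
pose B := [set p : Y * R | exists m r t, G (m, r) /\ p = (m + t *: y0, r + t * c0)].
exists B; split; last split.
- split.
  + move=> t; exists (t *: - u), (t * e), 0; split => //.
    by rewrite scale0r mul0r !addr0.
  + move=> a b r s [m1 [r1 [t1 [Gm1 [-> ->]]]]] [m2 [r2 [t2 [Gm2 [-> ->]]]]].
    exists (m1 + m2), (r1 + r2), (t1 + t2); split; first exact: G2.
    by rewrite scalerDl mulrDl; congr pair; rewrite addrACA.
  + move=> t a r [m1 [r1 [t1 [Gm1 [-> ->]]]]].
    exists (t *: m1), (t * r1), (t * t1); split; first exact: G3.
    by rewrite scalerDr scalerA mulrDr mulrA.
  + move=> a r s [m1 [r1 [t1 [Gm1 [-> ->]]]]] [m2 [r2 [t2 [Gm2 []]]]].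
    move=> ea ->.
    have [et|nt] := eqVneq t1 t2.
      move: ea; rewrite et => /addIr em; rewrite em in Gm1.
      by rewrite (G4 _ _ _ Gm1 Gm2).
    exfalso; apply: ny0.
    exists ((t2 - t1)^-1 * (r1 - r2)).
    have -> : y0 = (t2 - t1)^-1 *: (m1 - m2).
      have : m1 - m2 = (t2 - t1) *: y0.
        by rewrite scalerBl -[m1](addrK (t1 *: y0)) ea addrC !addrA addNr add0r.
      move=> ->; rewrite scalerA mulVf ?scale1r // subr_eq0 eq_sym //.
    by apply: G3; apply: G2 => //; apply: GN.
  + move=> a r c [m [r1 [t [Gm [-> ->]]]]] Cc.
    have [t0|t0|<-] := ltgtP 0 t; last first.
    * by rewrite scale0r mul0r !addr0; exact: G5.
    * have s0 : 0 < - t by rewrite oppr_gt0.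
      have := upper _ _ _ (G3 (- t)^-1 _ _ Gm) (Cscal _ _ (ltW (_ : 0 < (-t)^-1)) Cc).
      move=> /(_ ltac:(by rewrite invr_gt0)) h.
      have := norm_resc m (- y0) c s0 => hn.
      have : - t * ((- t)^-1 * r1 - `|(- t)^-1 *: m - y0 + (- t)^-1 *: c|) <= - t * c0.
        by rewrite ler_pM2l.
      rewrite mulrBr hn mulrA mulfV ?gt_eqF // mul1r scalerN scaleNr opprK => h2.
      lra.
    * have := lower _ _ _ (G3 t^-1 _ _ Gm) (Cscal _ _ (ltW (_ : 0 < t^-1)) Cc).
      move=> /(_ ltac:(by rewrite invr_gt0)) h.
      have := norm_resc m y0 c t0 => hn.
      have : t * c0 <= t * (`|t^-1 *: m + y0 + t^-1 *: c| - t^-1 * r1).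
        by rewrite ler_pM2l.
      rewrite mulrBr hn mulrA mulfV ?gt_eqF // mul1r => h2.
      lra.
- move=> [a r] Gar; exists a, r, 0; split => //.
  by rewrite scale0r mul0r !addr0.
- exists c0; split.
    by exists 0, 0, 1; split => //; rewrite scale1r mul1r !add0r.
  by move=> Gc; apply: ny0; exists c0.
Qed.

Lemma Pg_G0 (R : realType) (Y : normedModType R) (C : set Y) (u : Y) (e : R) :
  0 < e -> C 0 -> (forall t c, 0 <= t -> C c -> C (t *: c)) ->
  (forall c, C c -> e <= `|u - c|) ->
  Pg C u e [set p | exists t, p = (t *: - u, t * e)].
Proof.
move=> e0 C0 Cscal hE.
have u0 : u != 0 by apply/eqP => u0; have := hE 0 C0; rewrite u0 subr0 normr0; lra.
split.
- by move=> t; exists t.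
- move=> a b r s [t1 [-> ->]] [t2 [-> ->]]; exists (t1 + t2).
  by rewrite scalerDl mulrDl.
- move=> t a r [t1 [-> ->]]; exists (t * t1).
  by rewrite scalerA mulrA.
- move=> a r s [t1 [-> ->]] [t2 []] /eqP; rewrite -subr_eq0 -scalerBl scaler_eq0.
  rewrite oppr_eq0 (negbTE u0) orbF subr_eq0 => /eqP -> ->//.
- move=> a r c [t [-> ->]] Cc.
  have [t0|t0] := leP t 0.
    have : t * e <= 0 by rewrite mulr_le0_ge0 // ltW.
    have := normr_ge0 (t *: - u + c); lra.
  have hn := norm_resc 0 (- u) c t0.
  rewrite scaler0 !add0r -normrN opprD opprK in hn.
  have := hE _ (Cscal _ _ (ltW (_ : 0 < t^-1)) Cc).
  move=> /(_ ltac:(by rewrite invr_gt0)) h.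
  rewrite -hn ler_pM2l //.
Qed.

Lemma Pg_chain (R : realType) (Y : normedModType R) (C : set Y) (u : Y) (e : R)
  (F : set (set (Y * R))) :
  let G0 := [set p | exists t, p = (t *: - u, t * e)] in
  Pg C u e G0 ->
  F `<=` (fun X => Pg C u e (G0 `|` X)) -> total_on F subset ->
  Pg C u e (G0 `|` \bigcup_(X in F) X).
Proof.
move=> G0 PG0 FP Ftot.
have W p q : (G0 `|` \bigcup_(X in F) X) p -> (G0 `|` \bigcup_(X in F) X) q ->
    exists W, [/\ Pg C u e W, W `<=` G0 `|` \bigcup_(X in F) X, W p & W q].
  have sub X : F X -> G0 `|` X `<=` G0 `|` \bigcup_(X in F) X.
    by move=> FX x [?|Xx]; [left|right; exists X].
  case=> [G0p|[X FX Xp]] [G0q|[X' FX' Xq]].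
  - by exists G0; split => //; move=> x G0x; left.
  - by exists (G0 `|` X'); split; [exact: FP|exact: sub|left|right].
  - by exists (G0 `|` X); split; [exact: FP|exact: sub|right|left].
  - have [XX'|X'X] := Ftot _ _ FX FX'.
      by exists (G0 `|` X'); split; [exact: FP|exact: sub|right; apply: XX'|right].
    by exists (G0 `|` X); split; [exact: FP|exact: sub|right|right; apply: X'X].
split.
- by move=> t; left; exists t.
- move=> a b r s Ha Hb; have [W0 [[_ W2 _ _ _] sW Wa Wb]] := W _ _ Ha Hb.
  exact/sW/W2.
- move=> t a r Ha; have [W0 [[_ _ W3 _ _] sW Wa _]] := W _ _ Ha Ha.
  exact/sW/W3.
- move=> a r s Ha Hb; have [W0 [[_ _ _ W4 _] sW Wa Wb]] := W _ _ Ha Hb.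
  exact: W4 Wa Wb.
- move=> a r c Ha Cc; have [W0 [[_ _ _ _ W5] sW Wa _]] := W _ _ Ha Ha.
  exact: W5 Wa Cc.
Qed.

Lemma separation (R : realType) (Y : normedModType R) (C : set Y) (u : Y) :
  closed C -> C 0 -> (forall a b, C a -> C b -> C (a + b)) ->
  (forall t c, 0 <= t -> C c -> C (t *: c)) -> ~ C u ->
  exists z : Y -> R, [/\ (forall a x y, z (a *: x + y) = a * z x + z y),
    (forall y, z y <= `|y|), (forall c, C c -> 0 <= z c) & z u < 0].
Proof.
move=> Ccl C0 Cadd Cscal nCu.
have [e e0 be] : exists2 e : R, 0 < e & forall c, C c -> e <= `|u - c|.
  have : nbhs u (~` C) by apply: open_nbhs_nbhs; split => //; exact: closed_openC.
  case/nbhs_ballP => e e0 hb; exists e => // c Cc.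
  rewrite leNgt; apply/negP => lt; apply: (hb c) => //.
  by rewrite -ball_normE.
pose G0 := [set p : Y * R | exists t, p = (t *: - u, t * e)].
have PG0 : Pg C u e G0 by exact: Pg_G0.
have [A [PA Amax]] := Zorn_bigcup (fun F FP Ftot => Pg_chain PG0 FP Ftot).
set G := G0 `|` A in PA.
have tot : forall y, exists r, G (y, r).
  move=> y0; apply: contrapT => ny0.
  have [B [PB [GB [r [Br nGr]]]]] := Pg_ext C0 Cadd Cscal PA (fun h => ny0 h).
  apply: (Amax B).
    split; first by move=> x Ax; apply: GB; right.
    by move=> BA; apply: nGr; right; apply: BA.
  rewrite setUidr //.
  by case: PB => B1 _ _ _ _ x [t ->].
have [z hz] := choice tot.
case: PA => G1 G2 G3 G4 G5.
have zlin a x y : z (a *: x + y) = a * z x + z y.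
  by apply: G4 (hz _) _; apply: G2 => //; apply: G3.
exists z; split => //.
- by move=> y; have := G5 _ _ _ (hz y) C0; rewrite addr0.
- move=> c Cc; have := G5 _ _ _ (G3 (-1) _ _ (hz c)) Cc.
  by rewrite scaleN1r addNr normr0 mulN1r oppr_le0.
- have h1 := G1 1; rewrite scale1r mul1r in h1.
  have h2 := G3 (-1) _ _ h1; rewrite scaleN1r opprK mulN1r in h2.
  by rewrite (G4 _ _ _ (hz u) h2) oppr_lt0.
Qed.

Local Open Scope convex_scope.

Lemma cadd (R : realType) (Y : normedModType R) (C : set Y) :
  convex_set C -> is_cone C -> forall a b, C a -> C b -> C (a + b).
Proof.
move=> cvx cone a b Ca Cb.
have h0 : (0 : R) <= 2^-1 by rewrite invr_ge0.
have h1 : (2^-1 : R) <= 1 by rewrite invf_le1 // ler1n.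
pose l : {i01 R} := Itv01 h0 h1.
have := cvx a b l; rewrite !inE => /(_ Ca Cb) h.
have := cone 2 _ (ler0n _ 2) h.
rewrite (_ : (a : convex_lmodType Y) <| l |> b = 2^-1 *: a + (1 - 2^-1) *: b) //.
rewrite scalerDr !scalerA mulfV ?pnatr_eq0 // scale1r.
rewrite (_ : 2 * (1 - 2^-1) = 1 :> R) ?scale1r //.
by field.
Qed.

Lemma lin_facts (R : realType) (V : normedModType R) (z : V -> R) :
  (forall a x y, z (a *: x + y) = a * z x + z y) ->
  [/\ z 0 = 0, forall x, z (- x) = - z x, forall x y, z (x + y) = z x + z y
    & forall a x, z (a *: x) = a * z x].
Proof.
move=> zl.
have z0 : z 0 = 0.
  have := zl 1 0 0; rewrite scale1r addr0 mul1r => h; lra.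
have zD x y : z (x + y) = z x + z y by rewrite -[x]scale1r zl mul1r scale1r.
have zZ a x : z (a *: x) = a * z x by rewrite -[a *: x]addr0 zl z0 addr0.
split => // x; by rewrite -scaleN1r zZ mulN1r.
Qed.

Lemma dual_of (R : realType) (Y : normedModType R) (z : Y -> R) :
  (forall a x y, z (a *: x + y) = a * z x + z y) ->
  (forall y, z y <= `|y|) -> dual_elt z.
Proof.
move=> zl zb; split => // x.
have [z0 zN zD zZ] := lin_facts zl.
apply/cvgrPdist_lt => eps e0.
apply/nbhs_ballP; exists eps => // t; rewrite -ball_normE /= => h.
rewrite -zN -zD.
have h1 := zb (x - t); have h2 := zb (- (x - t)).
rewrite zN normrN in h2.
apply: (le_lt_trans _ h); rewrite ler_norml; apply/andP; split; lra.
Qed.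

Unset Implicit Arguments.
Set Strict Implicit.

Theorem proposition2p17 (R : realType) (E Y : completeNormedModType R)
  (K : set E) (g : E -> R) (gd : E -> E -> R) (C : set Y)
  (f : E -> E -> Y) (T : E -> set E) :
  K !=set0 -> closed K -> convex_set K ->
  class_F g gd -> totally_convex g gd -> H1 g gd -> H2 g gd ->
  closed C -> convex_set C -> is_cone C -> pointed C -> interior C !=set0 ->
  (forall x, K x -> T x !=set0 /\ closed (T x) /\ convex_set (T x) /\ T x `<=` K) ->
  quasi_Dg_nonexpansive g gd K T ->
  (forall x, C_convex C (f x) /\ pos_lsc C (f x)) ->
  closed (DS K C f T) /\ convex_set (DS K C f T).
Proof.
move=> K0 Kcl Kcvx [gsc [glsc gder]] gtc _ _ Ccl Ccvx Ccone Cpt [c1 /interior_subset Cc1]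
  Thyp [S [Sproj [SFix Sq]]] fhyp.
have C0 : C 0 by have := Ccone 0 _ (lexx 0) Cc1; rewrite scale0r.
have Cadd := cadd Ccvx Ccone.
have gdl x := lin_facts (gder x).1.1.
have gdc x : continuous (gd x) := (gder x).1.2.
have bxx x : bregman g gd x x = 0.
  by rewrite /bregman !subrr; have [-> _ _ _] := gdl x; rewrite subr0.
have bpos x y : bregman g gd y x <= 0 -> y = x.
  move=> h; apply: contrapT => /eqP nyx.
  have : (0 < `|y - x|) by rewrite normr_gt0 subr_eq0.
  move=> /(gtc x) /lt_le_trans /(_ (ereal_inf_lbound _)).
  move=> /(_ (bregman g gd y x)%:E) /(_ (ex_intro2 _ _ y erefl erefl)).
  by rewrite lte_fin; lra.
have fixS p : K p -> T p p -> S p = p.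
  by move=> Kp Tpp; apply: bpos; have [_ /(_ p Tpp)] := Sproj p Kp; rewrite bxx.
pose L x p := g x - g (S x) - gd (S x) p + gd (S x) (S x) + gd x p - gd x x.
have LE x p : bregman g gd p (S x) - bregman g gd p x = L x p.
  rewrite /L /bregman; have [_ N1 D1 _] := gdl x; have [_ N2 D2 _] := gdl (S x).
  rewrite D1 D2 N1 N2; lra.
have Lle x p : K x -> K p -> T p p -> L x p <= 0.
  move=> Kx Kp Tpp; rewrite -LE subr_le0; apply: Sq => //; split => //; exact: fixS.
have Lcl x : closed [set p | L x p <= 0].
  have Lc : continuous (L x).
    move=> p; rewrite /L.
    apply: cvgB; first apply: cvgD; first apply: cvgD; first apply: cvgB.
    - exact: cvg_cst.
    - exact: gdc.
    - exact: cvg_cst.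
    - exact: gdc.
    - exact: cvg_cst.
  have h := (continuous_closedP _).1 Lc _ (@closed_le R 0).
  exact h.
have DSK : DS K C f T `<=` K by move=> p [].
split.
- move=> x clx.
  have Kx : K x by apply: Kcl; apply: closure_subset clx.
  have Txx : T x x.
    have : L x x <= 0.
      apply: (Lcl x); apply: (closure_subset _ clx) => p [Kp [Tpp _]].
      exact: Lle.
    rewrite -LE bxx subr0 => /bpos Sx.
    by rewrite {2}Sx; case: (Sproj x Kx).
  split => //; split => // y Ky.
  apply: contrapT => nC.
  have nCu : ~ C (- f y x) by move=> h; apply: nC; exists (- f y x); rewrite ?opprK.
  have [z [zl zb zC zu]] := separation Ccl C0 Cadd Ccone nCu.
  have [z0 zN zD zZ] := lin_facts zl.
  have dz : dual_cone C z by split => //; exact: dual_of.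
  have := (fhyp y).2 z dz x 0; rewrite lte_fin.
  rewrite zN oppr_lt0 in zu => /(_ zu) [V Vx HV].
  have [p [[Kp [Tpp Hp]] Vp]] := clx V Vx.
  have [c Cc ep] := Hp y Ky.
  have := HV p Vp; rewrite lte_fin -ep zN oppr_gt0.
  by have := zC c Cc; lra.
- move=> x1 x2 l; rewrite !inE => -[Kx1 [Tx1 Hx1]] [Kx2 [Tx2 Hx2]].
  set p := x1 <| l |> x2.
  have pE : p = l%:num *: x1 + (1 - l%:num) *: x2 by [].
  have Kp : K p by have := Kcvx x1 x2 l; rewrite !inE; apply.
  have l0 : 0 <= l%:num by apply: ge0.
  have l1 : l%:num <= 1 by apply: le1.
  split => //; split.
    have : L p p <= 0.
      have h1 := Lle p x1 Kp Kx1 Tx1; have h2 := Lle p x2 Kp Kx2 Tx2.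
      have Ep y : gd y p = l%:num * gd y x1 + (1 - l%:num) * gd y x2.
        by have [_ _ D1 Z1] := gdl y; rewrite pE D1 !Z1.
      move: h1 h2; rewrite /L !Ep => h1 h2.
      have e1 := mulr_ge0_le0 l0 h1.
      have e2 := mulr_ge0_le0 (_ : 0 <= 1 - l%:num) h2.
      have := e2 ltac:(by rewrite subr_ge0) => {}e2.
      lra.
    rewrite -LE bxx subr0 => /bpos Sx.
    by rewrite {2}Sx; case: (Sproj p Kp).
  move=> y Ky.
  have [c1' Cc1' e1] := Hx1 y Ky; have [c2' Cc2' e2] := Hx2 y Ky.
  have := (fhyp y).1 x1 x2 (l%:num) ltac:(by rewrite l0 l1).
  rewrite /cone_le -pE -e1 -e2 => hv.
  exists (l%:num *: c1' + (1 - l%:num) *: c2' + (l%:num *: - c1' + (1 - l%:num) *: - c2' - f y p)).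
    apply: (Cadd) => //; apply: (Cadd); apply: (Ccone) => //; by rewrite subr_ge0.
  by rewrite !scalerN -opprD addrA subrr add0r opprK.
Qed.
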